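(* Let $D \subset \mathbb{N}$ be finite and let $G_n$ be the circulant graph on $n$ vertices with set of distances $D$. Then \[ \lim_{n \to \infty} \frac{\alpha(G_n)}{n} = \sup_{n} \frac{\alpha(G_n)}{n}. \]
   Context: $\mathbb{N} = \{1,2,\ldots\}$. $G_n$ has vertex set $\{0, \ldots, n-1\}$, and vertices $u, v$ (possibly equal) are adjacent iff there is $d \in D$ with $u - v \equiv d \pmod n$ or $v - u \equiv d \pmod n$ (loops may occur when $n \leq \max D$). $\alpha(G)$ is the maximum size of an independent set, which contains no two adjacent vertices and no vertex with a loop. *)

(* Defs.v *)
From mathcomp Require Import all_boot.
Set Implicit Arguments. Unset Strict Implicit. Unset Printing Implicit Defensive.

(* Circulant graph G_n on vertex set 'I_n = {0,...,n-1} with distance set D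
   (a finite set of positive naturals, given as a list).
   u ~ v iff exists d in D, u - v = d (mod n) or v - u = d (mod n);
   loops (u ~ u) occur when some d is divisible by n. *)
Definition circ_adj (D : seq nat) (n : nat) (u v : 'I_n) : bool :=
  has (fun d => ((v + d) %% n == u %% n) || ((u + d) %% n == v %% n)) D.

(* An independent set: no two (possibly equal) vertices adjacent,
   so in particular no vertex carrying a loop. *)
Definition circ_indep (D : seq nat) (n : nat) (S : {set 'I_n}) : bool :=
  [forall u in S, forall v in S, ~~ circ_adj D u v].

Definition circ_alpha (D : seq nat) (n : nat) : nat :=
  \max_(S : {set 'I_n} | circ_indep D S) #|S|.

(* Main.v *)
Require Import Defs.
From mathcomp Require Import all_boot.
From Stdlib Require Import Reals.
From mathcomp Require Import zify.
From Stdlib Require Import Lra Classical.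


Lemma alpha_le (D : seq nat) n : circ_alpha D n <= n.
Proof.
rewrite /circ_alpha; apply/bigmax_leqP => S _.
by apply: leq_trans (max_card _) _; rewrite card_ord.
Qed.

Lemma alpha_ge (D : seq nat) n (S : {set 'I_n}) : circ_indep D S -> #|S| <= circ_alpha D n.
Proof. by move=> H; rewrite /circ_alpha; apply: (@leq_bigmax_cond _ (fun S => circ_indep D S) (fun S => #|S|)). Qed.

Lemma alpha_attained (D : seq nat) n : exists2 S : {set 'I_n}, circ_indep D S & circ_alpha D n = #|S|.
Proof.
have h0 : circ_indep D (set0 : {set 'I_n}) by rewrite /circ_indep; apply/forall_inP => u; rewrite in_set0.
have : 0 < #|[pred S : {set 'I_n} | circ_indep D S]|.
  by apply/card_gt0P; exists set0.
move/(eq_bigmax_cond (fun S : {set 'I_n} => #|S|)) => [S HS E].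
exists S => //.
Qed.

Lemma blk_lt i s p n : i < p -> s < n -> i * n + s < p * n.
Proof.
move=> hi hs; apply: (@leq_trans (i.+1 * n)); first by rewrite mulSn [n + _]addnC ltn_add2l.
by rewrite leq_mul2r hi orbT.
Qed.
Arguments blk_lt {i s p n}.

Lemma alpha_mul (D : seq nat) M n m p :
  all (fun d => d <= M) D -> p * n + M <= m -> p * circ_alpha D n <= circ_alpha D m.
Proof.
move=> HM Hm.
case: p Hm => [|p'] Hm; first by rewrite mul0n.
case: n Hm => [|n'] Hm.
  by have := alpha_le D 0; rewrite leqn0 => /eqP ->; rewrite muln0.
case: m Hm => [|m'] Hm; first by lia.
set p := p'.+1 in Hm *; set n := n'.+1 in Hm *.
have [S HS ->] := alpha_attained D n.
pose f := fun x : 'I_p * 'I_n => (inord (x.1 * n + x.2) : 'I_m'.+1).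
have fval : forall x : 'I_p * 'I_n, (f x : nat) = x.1 * n + x.2.
  move=> [i s]; rewrite /f inordK //= .
  have := blk_lt (ltn_ord i) (ltn_ord s); lia.
have finj : injective f.
  move=> [i s] [j t] Ef; have := fval (i, s); rewrite Ef fval /= => E.
  have Es : (s : nat) = t.
    by have := congr1 (modn^~ n) E; rewrite !modnMDl !modn_small.
  have Ei : (i : nat) = j.
    by have := congr1 (divn^~ n) E; rewrite !divnMDl // !divn_small // !addn0.
  by congr pair; apply: val_inj.
have <- : #|[set f x | x in setX [set: 'I_p] S]| = p * #|S|.
  by rewrite card_imset // cardsX cardsT card_ord.
apply: alpha_ge; rewrite /circ_indep.
apply/forall_inP => u /imsetP [[i s] /setXP [_ Hs] ->].
apply/forall_inP => v /imsetP [[j t] /setXP [_ Ht] ->].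
apply/hasPn => d Hd.
have dM : d <= M by move/allP: HM => /(_ d Hd).
move: HS; rewrite /circ_indep => /forallP => /(_ s); rewrite Hs /= => /forallP /(_ t); rewrite Ht /=.
move/hasPn => /(_ d Hd).
rewrite !fval /= => Hst.
have hi := ltn_ord i; have hj := ltn_ord j; have hs := ltn_ord s; have ht := ltn_ord t.
apply/negP => /orP [] /eqP E.
- rewrite (modn_small (m := j * n + t + d)) in E; last by have := blk_lt hi hs; have := blk_lt hj ht; lia.
  rewrite (modn_small (m := i * n + s)) in E; last by have := blk_lt hi hs; have := blk_lt hj ht; lia.
  case/norP: Hst => /negP H1 _; apply: H1; apply/eqP.
  by rewrite -(modnMDl j (t + d)) addnA E modnMDl.
- rewrite (modn_small (m := i * n + s + d)) in E; last by have := blk_lt hi hs; have := blk_lt hj ht; lia.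
  rewrite (modn_small (m := j * n + t)) in E; last by have := blk_lt hi hs; have := blk_lt hj ht; lia.
  case/norP: Hst => _ /negP H1; apply: H1; apply/eqP.
  by rewrite -(modnMDl i (s + d)) addnA E modnMDl.
Qed.

Open Scope R_scope.

Lemma key (A N P Am mm MM L e : R) :
  P * A <= Am -> mm < P * N + N + MM -> 0 <= A -> A <= N -> 1 <= N -> 0 <= MM ->
  L - e/2 < A / N -> MM + N < e/2 * mm -> 0 < mm -> 0 < e ->
  L - e < Am / mm.
Proof.
intros H1 H2 H3 H4 H5 H6 H7 H8 H9 H10.
set (r := A / N) in *.
assert (Ar : A = r * N) by (unfold r; field; lra).
assert (r0 : 0 <= r) by (unfold r; apply Rmult_le_pos; [lra | left; apply Rinv_0_lt_compat; lra]).
assert (r1 : r <= 1).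
{ apply Rmult_le_reg_r with N; [lra|]. rewrite <- Ar. lra. }
assert (HP : P * N >= mm - N - MM) by lra.
assert (H11 : (mm - N - MM) * r <= (P * N) * r) by (apply Rmult_le_compat_r; lra).
assert (H12 : (N + MM) * r <= N + MM) by nra.
assert (H13 : mm * (L - e/2) < mm * r) by (apply Rmult_lt_compat_l; lra).
assert (Hm : (L - e) * mm < Am) by nra.
apply Rmult_lt_reg_r with mm; [lra|].
replace (Am / mm * mm) with Am by (field; lra). lra.
Qed.

Lemma div_le1 (A N : R) : 0 < N -> A <= N -> A / N <= 1.
Proof.
intros HN HA. apply Rmult_le_reg_r with N; [lra|].
replace (A / N * N) with A by (field; lra). lra.
Qed.

Lemma all_le_sumn (D : seq nat) : all (fun d : nat => leq d (sumn D)) D.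
Proof.
elim: D => [|x D IH] //=; rewrite leq_addr /=.
apply/allP => d Hd; move/allP: IH => /(_ d Hd) H; apply: leq_trans H _; exact: leq_addl.
Qed.

Theorem theorem1 (D : seq nat) (HD : all (fun d : nat => leq 1 d) D) :
  exists L : R,
    is_lub (fun r : R => exists n : nat, leq 1 n /\
                          r = INR (circ_alpha D n) / INR n) L /\
    Un_cv (fun k : nat => INR (circ_alpha D k.+1) / INR k.+1) L.
Proof.
pose M := sumn D.
have HM : all (fun d : nat => leq d M) D by exact: all_le_sumn.
set E := (fun r : R => exists n : nat, leq 1 n /\ r = INR (circ_alpha D n) / INR n).
have bE : bound E.
  exists 1; intros x [n [Hn ->]]; apply div_le1.
  - by apply lt_0_INR; apply/ltP.
  - by apply le_INR; apply/leP; apply: alpha_le.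
have nE : exists x, E x by exists (INR (circ_alpha D 1%nat) / INR 1%nat); exists 1%nat.
destruct (completeness E bE nE) as [L HL].
exists L; split; first exact HL.
intros e He.
have [n0 [Hn0 Hr0]] : exists n0 : nat, (1 <= n0)%nat /\ L - e/2 < INR (circ_alpha D n0) / INR n0.
  apply NNPP => Hno.
  have Hub : is_upper_bound E (L - e/2).
    intros x [n [Hn ->]]; apply Rnot_lt_le => Hlt; apply Hno; exists n; split => //.
  destruct HL as [_ Hmin]; have := Hmin _ Hub; lra.
have [N HN] := INR_archimed (e/2) (INR M + INR n0) ltac:(lra).
exists N => k Hk; rewrite /R_dist.
set m := k.+1.
have Hle : INR (circ_alpha D m) / INR m <= L by apply (proj1 HL); exists m.
set p := ((m - M) %/ n0)%nat.
have Hdiv := divn_eq (m - M) n0.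
have Hmod : ((m - M) %% n0 < n0)%nat by rewrite ltn_pmod.
have Hpa : (p * circ_alpha D n0 <= circ_alpha D m)%nat.
  case: (leqP M m) => HMm.
    apply: alpha_mul HM _; rewrite -/p in Hdiv; lia.
  have -> : p = 0%nat by rewrite /p (_ : (m - M = 0)%nat) ?div0n //; lia.
  by rewrite mul0n.
have Hm1 : (m < p * n0 + n0 + M)%nat by rewrite -/p in Hdiv; lia.
have Hgt : L - e < INR (circ_alpha D m) / INR m.
  apply key with (A := INR (circ_alpha D n0)) (N := INR n0) (P := INR p) (MM := INR M).
  - by rewrite -mult_INR; apply le_INR; apply/leP.
  - by rewrite -mult_INR -!plus_INR; apply lt_INR; apply/ltP.
  - exact: pos_INR.
  - by apply le_INR; apply/leP; apply: alpha_le.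
  - by apply (le_INR 1%nat); apply/leP.
  - exact: pos_INR.
  - exact Hr0.
  - have HNm : INR N <= INR m by apply le_INR; apply/leP; move/leP: Hk; rewrite /m; lia.
    have : e / 2 * INR N <= e / 2 * INR m by apply Rmult_le_compat_l; lra.
    lra.
  - by apply lt_0_INR; apply/ltP.
  - exact He.
apply Rabs_def1; lra.
Qed.
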